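(* Let $E$ be a real Banach lattice. Then there is a lattice homomorphism $P:FBL[E]\to E$ with $P(\delta_x)=x$ for all $x\in E$; in particular $E$ is the range of the lattice projection $P$ (identifying $E$ with $\phi_E(E)=\{\delta_x:x\in E\}\subseteq FBL[E]$).
   Context: For a real Banach space $E$ with dual $E^*$ and closed unit ball $B_E$, let $H[E]$ be the vector space of all positively homogeneous functions $f:E^*\to\mathbb R$ ($f(\lambda x^* )=\lambda f(x^* )$ for $\lambda>0$). For $f\in H[E]$ put $\|f\|_{FBL[E]}:=\sup\{\sum_{k=1}^n|f(x_k^* )| : n\in\mathbb N,\ x_1^*,\dots,x_n^*\in E^*,\ \sup_{x\in B_E}\sum_{k=1}^n|x_k^*(x)|\le 1\}$. $H_0[E]:=\{f\in H[E]:\|f\|_{FBL[E]}<\infty\}$ is a Banach lattice with this norm and pointwise order/operations. For $x\in E$ let $\delta_x(x^* )=x^*(x)$. $FBL[E]$ is the closed sublattice of $H_0[E]$ generated by $\{\delta_x:x\in E\}$, and $\phi_E(x)=\delta_x$ (a linear isometry of $E$ into $FBL[E]$). *)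

(* Defs.v *)
From HB Require Import structures.
From mathcomp Require Import all_boot all_order all_algebra.
From mathcomp Require Import all_classical all_reals.
From mathcomp Require Import ereal topology normedtype.
Set Implicit Arguments. Unset Strict Implicit. Unset Printing Implicit Defensive.
Import Order.TTheory GRing.Theory Num.Theory.
Import numFieldNormedType.Exports.
Local Open Scope classical_set_scope.
Local Open Scope ring_scope.

Section FBL.
Variables (R : realType) (E : normedModType R).

Definition is_sup (le : E -> E -> Prop) (x y s : E) : Prop :=
  le x s /\ le y s /\ (forall z, le x z -> le y z -> le s z).

(* (E, le) is a (real) Banach lattice; completeness comes from the
   completeNormedModType structure in the theorem statement. *)
Definition banach_lattice (le : E -> E -> Prop) : Prop :=
  [/\ (forall x, le x x) /\
      (forall x y, le x y -> le y x -> x = y) /\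
      (forall x y z, le x y -> le y z -> le x z),
      (forall x y z, le x y -> le (x + z) (y + z)),
      (forall x y (a : R), le x y -> 0 <= a -> le (a *: x) (a *: y)),
      (forall x y, exists s, is_sup le x y s) &
      (forall x y ax ay, is_sup le x (- x) ax -> is_sup le y (- y) ay ->
          le ax ay -> `|x| <= `|y|)].

Definition is_dual (xs : E -> R) : Prop :=
  (forall (a : R) (x y : E), xs (a *: x + y) = a * xs x + xs y) /\
  (exists C : R, forall x, `|xs x| <= C * `|x|).

Definition dual := {xs : E -> R | is_dual xs}.

Definition pos_homogeneous (f : dual -> R) : Prop :=
  forall (a : R) (xs ys : dual), 0 < a ->
    (forall x, sval ys x = a * sval xs x) -> f ys = a * f xs.

Definition fbl_norm (f : dual -> R) : \bar R :=
  ereal_sup [set r : \bar R | exists (n : nat) (xs : 'I_n -> dual),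
     (forall x : E, `|x| <= 1 -> \sum_(k < n) `|sval (xs k) x| <= 1) /\
     r = (\sum_(k < n) `|f (xs k)|)%:E].

Definition lt_ereal (a b : \bar R) : Prop := (a < b)%E.

Definition H0 (f : dual -> R) : Prop :=
  pos_homogeneous f /\ (fbl_norm f < +oo)%E.

Definition delta (x : E) : dual -> R := fun xs => sval xs x.

Definition fbl_closed (S : (dual -> R) -> Prop) : Prop :=
  [/\ (forall x, S (delta x)),
      (forall f g, S f -> S g -> S (fun xs => f xs + g xs)),
      (forall (a : R) f, S f -> S (fun xs => a * f xs)),
      (forall f g, S f -> S g -> S (fun xs => Num.max (f xs) (g xs))) &
      (forall f, H0 f ->
         (forall e : R, 0 < e -> exists g, S g /\ lt_ereal (fbl_norm (fun xs => f xs - g xs)) e%:E) ->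
         S f)].

Definition FBL (f : dual -> R) : Prop :=
  H0 f /\ forall S, fbl_closed S -> S f.

End FBL.

(* Main.v *)
Require Import Defs.
From HB Require Import structures.
From mathcomp Require Import all_boot all_order all_algebra.
From mathcomp Require Import all_classical all_reals.
From mathcomp Require Import ereal topology normedtype.
From mathcomp Require Import ring lra.
Import Order.TTheory GRing.Theory Num.Theory.
Import numFieldNormedType.Exports.
Local Open Scope ring_scope.

Module Helpers.
Set Implicit Arguments. Unset Strict Implicit. Unset Printing Implicit Defensive.
Local Open Scope classical_set_scope.


Section HBS.
Variables (R : realType) (V : lmodType R).

Definition iinf (T : Type) (P : T -> Prop) (F : T -> R) : R := inf [set F t | t in P].

Lemma iinf_le T (P : T -> Prop) (F : T -> R) c t0 :
  (forall t, P t -> c <= F t) -> P t0 -> iinf P F <= F t0.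
Proof.
move=> hc Pt0; rewrite /iinf; apply: ge_inf; last by exists t0.
by exists c => _ [t Pt <-]; exact: hc.
Qed.

Lemma le_iinf T (P : T -> Prop) (F : T -> R) x t0 :
  P t0 -> (forall t, P t -> x <= F t) -> x <= iinf P F.
Proof.
move=> Pt0 hx; rewrite /iinf; apply: lb_le_inf; first by exists (F t0), t0.
by move=> _ [t Pt <-]; exact: hx.
Qed.

Definition sublin (q : V -> R) :=
  (forall x y, q (x + y) <= q x + q y) /\ (forall a x, 0 <= a -> q (a *: x) = a * q x).

Lemma sublin0 q : sublin q -> q 0 = 0.
Proof. by case=> _ h; rewrite -(scale0r (0:V)) h // mul0r. Qed.

Lemma sublin_lb q x y t : sublin q -> 0 <= t -> - q (- y) <= q (y + t *: x) - t * q x.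
Proof.
move=> [hD hH] t0.
have := hD (y + t *: x) (- y); rewrite addrC addKr hH //.
lra.
Qed.

Definition shift (q : V -> R) (x : V) (y : V) : R :=
  iinf (fun t : R => 0 <= t) (fun t => q (y + t *: x) - t * q x).

Lemma shift_le q x y t : sublin q -> 0 <= t -> shift q x y <= q (y + t *: x) - t * q x.
Proof.
move=> hq t0; apply: (@iinf_le _ _ _ (- q (- y))) => // s s0.
exact: sublin_lb.
Qed.

Lemma shift_ge q x y c : sublin q ->
  (forall t, 0 <= t -> c <= q (y + t *: x) - t * q x) -> c <= shift q x y.
Proof. by move=> hq h; apply: (@le_iinf _ _ _ _ 0). Qed.

Lemma shift_leq q x y : sublin q -> shift q x y <= q y.
Proof. by move=> hq; have := shift_le x y hq (lexx 0); rewrite scale0r addr0 mul0r subr0. Qed.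

Lemma shift_neg q x : sublin q -> shift q x (- x) <= - q x.
Proof. move=> hq; have := shift_le x (- x) hq ler01; rewrite scale1r addNr (sublin0 hq) mul1r sub0r. by []. Qed.

Lemma shift_lb q x y : sublin q -> - q (- y) <= shift q x y.
Proof. by move=> hq; apply: shift_ge => // t t0; exact: sublin_lb. Qed.

Lemma shift_sublin q x : sublin q -> sublin (shift q x).
Proof.
move=> hq; have [hD hH] := hq; split.
- move=> y1 y2.
  suff: forall t1, 0 <= t1 -> shift q x (y1 + y2) - (q (y1 + t1 *: x) - t1 * q x) <= shift q x y2.
    move=> h; have: shift q x (y1 + y2) - shift q x y2 <= shift q x y1.
      apply: shift_ge => // t1 t10; have := h t1 t10; lra.
    lra.
  move=> t1 t10; apply: shift_ge => // t2 t20.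
  have := shift_le x (y1 + y2) hq (addr_ge0 t10 t20).
  have := hD (y1 + t1 *: x) (y2 + t2 *: x).
  have -> : y1 + t1 *: x + (y2 + t2 *: x) = y1 + y2 + (t1 + t2) *: x.
    by rewrite scalerDl; rewrite -!addrA; congr (_ + _); rewrite addrCA.
  lra.
- move=> a y a0; have [->|ap] := eqVneq a 0.
    rewrite scale0r mul0r; apply/eqP; rewrite eq_le; apply/andP; split.
      by have := shift_le x 0 hq (lexx 0); rewrite scale0r addr0 (sublin0 hq) mul0r subr0 => h.
    by apply: shift_ge => // t t0; rewrite add0r hH //; lra.
  have a0' : 0 < a by rewrite lt_def ap a0.
  apply/eqP; rewrite eq_le; apply/andP; split.
  + rewrite -ler_pdivrMl //; apply: shift_ge => // t t0.
    rewrite ler_pdivrMl //.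
    have := shift_le x (a *: y) hq (mulr_ge0 a0 t0).
    by rewrite -scalerA -scalerDr hH // mulrBr mulrA.
  + apply: shift_ge => // t t0.
    have t'0 : 0 <= t / a by rewrite divr_ge0 // ltW.
    have := shift_le x y hq t'0.
    have -> : y + (t / a) *: x = a^-1 *: (a *: y + t *: x).
      by rewrite scalerDr scalerA mulVf // scale1r scalerA mulrC.
    rewrite hH; last by rewrite invr_ge0 ltW.
    move=> h.
    have := ler_wpM2l (ltW a0') h.
    move=> h2; apply: (le_trans h2); rewrite le_eqVlt; apply/orP; left; apply/eqP.
    by field.
Qed.

Lemma sublin_neg q x : sublin q -> - q (- x) <= q x.
Proof. move=> [hD hH]; have := hD x (- x); rewrite addrN. have := sublin0 (conj hD hH). lra. Qed.

Lemma minimal_sublin (q0 : V -> R) : sublin q0 ->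
  exists q, [/\ sublin q, (forall x, q x <= q0 x) & forall x, q (- x) <= - q x].
Proof.
move=> hq0.
pose T := {q : V -> R | sublin q /\ (forall x, q x <= q0 x)}.
pose t0 : T := exist _ q0 (conj hq0 (fun x => lexx _)).
pose Rl := fun s t : T => `[< forall x, sval t x <= sval s x >].
have [| | |t tmax] := @ZL_preorder T t0 Rl.
- by move=> t; apply/asboolP => x.
- move=> r s t /asboolP h1 /asboolP h2; apply/asboolP => x; exact: le_trans (h2 x) (h1 x).
- move=> A Atot.
  have [[s0 As0]|A0] := pselect (exists s, A s); last first.
    by exists t0 => s As; exfalso; apply: A0; exists s.
  pose m := fun x => iinf A (fun s : T => sval s x).
  have lbA : forall x (s : T), A s -> - q0 (- x) <= sval s x.
    move=> x s _; apply: le_trans (sublin_neg x (proj1 (svalP s))).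
    by rewrite lerN2; exact: (proj2 (svalP s)).
  have mle : forall x (s : T), A s -> m x <= sval s x.
    by move=> x s As; apply: (iinf_le (lbA x)).
  have mge : forall x c, (forall s : T, A s -> c <= sval s x) -> c <= m x.
    by move=> x c h; apply: (le_iinf (t0 := s0)).
  have msub : sublin m.
    split.
    - move=> x y.
      suff h : forall s2 : T, A s2 -> m (x + y) - sval s2 y <= m x.
        have : m (x + y) - m x <= m y.
          by apply: mge => s2 As2; have := h s2 As2; lra.
        lra.
      move=> s2 As2; apply: mge => s1 As1.
      have key : forall s : T, A s -> (forall z, sval s z <= sval s1 z) ->
          (forall z, sval s z <= sval s2 z) -> m (x + y) - sval s2 y <= sval s1 x.
        move=> s As h1 h2; have := mle (x + y) s As.
        have := (proj1 (proj1 (svalP s))) x y.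
        have := h1 x; have := h2 y; lra.
      have [/asboolP h|/asboolP h] := Atot s1 s2 As1 As2.
      + by apply: (key s2 As2) => // z.
      + by apply: (key s1 As1) => // z.
    - move=> a x a0; have [->|an0] := eqVneq a 0.
        rewrite scale0r mul0r; apply/eqP; rewrite eq_le; apply/andP; split.
          by have := mle 0 s0 As0; rewrite (sublin0 (proj1 (svalP s0))).
        by apply: mge => s As; rewrite (sublin0 (proj1 (svalP s))).
      have ap : 0 < a by rewrite lt_def an0 a0.
      apply/eqP; rewrite eq_le; apply/andP; split.
      + rewrite -ler_pdivrMl //; apply: mge => s As; rewrite ler_pdivrMl //.
        by rewrite -(proj2 (proj1 (svalP s))) //; exact: mle.
      + apply: mge => s As; rewrite (proj2 (proj1 (svalP s))) //.
        by apply: ler_wpM2l => //; exact: mle.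
  have mq0 : forall x, m x <= q0 x.
    by move=> x; apply: le_trans (mle x s0 As0) _; exact: (proj2 (svalP s0)).
  exists (exist _ m (conj msub mq0)) => s As; apply/asboolP => x /=; exact: mle.
- have [hq hle] := svalP t.
  have hs : sublin (shift (sval t) 0) by exact: shift_sublin.
  exists (sval t); split => // x.
  have hsx := shift_sublin x hq.
  pose s : T := exist _ (shift (sval t) x) (conj hsx (fun z => le_trans (shift_leq x z hq) (hle z))).
  have /asboolP h : Rl s t.
    by apply: tmax; apply/asboolP => z /=; exact: shift_leq.
  exact: le_trans (h (- x)) (shift_neg x hq).
Qed.

Definition linR (u : V -> R) := forall (a : R) x y, u (a *: x + y) = a * u x + u y.

Lemma hahn_banach (p : V -> R) (x0 : V) : sublin p ->
  exists u, [/\ linR u, (forall x, u x <= p x) & u x0 = p x0].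
Proof.
move=> hp; have hq0 := shift_sublin x0 hp.
have [q [hq hqle hqn]] := minimal_sublin hq0.
have odd : forall x, q (- x) = - q x.
  move=> x; apply/eqP; rewrite eq_le hqn /=.
  by have := sublin_neg x hq; lra.
have add : forall x y, q (x + y) = q x + q y.
  move=> x y; apply/eqP; rewrite eq_le (proj1 hq) /=.
  have := (proj1 hq) (- x) (- y); rewrite -opprD !odd; lra.
have scal : forall a x, q (a *: x) = a * q x.
  move=> a x; have [a0|a0] := leP 0 a; first by rewrite (proj2 hq).
  have := (proj2 hq) (- a) x; rewrite oppr_ge0 ltW // => /(_ isT).
  by rewrite scaleNr odd mulNr => /eqP; rewrite eqr_opp => /eqP.
exists q; split.
- by move=> a x y; rewrite add scal.
- by move=> x; apply: le_trans (hqle x) _; exact: shift_leq.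
- apply/eqP; rewrite eq_le; apply/andP; split.
    by apply: le_trans (hqle x0) _; exact: shift_leq.
  have := hqle (- x0); have := shift_neg x0 hp; rewrite odd; lra.
Qed.
End HBS.



Section LAT.
Variables (R : realType) (E : normedModType R) (le : E -> E -> Prop).
Hypothesis hE : banach_lattice le.

Lemma leR x : le x x. Proof. by case: hE => [[h [h' h'']] _ _ _ _]. Qed.
Lemma leA x y : le x y -> le y x -> x = y. Proof. by case: hE => [[h [h' h'']] _ _ _ _]; apply: h'. Qed.
Lemma leT x y z : le x y -> le y z -> le x z. Proof. by case: hE => [[h [h' h'']] _ _ _ _]; apply: h''. Qed.
Lemma leD x y z : le x y -> le (x + z) (y + z). Proof. by case: hE => _ h _ _ _; apply: h. Qed.
Lemma leZ x y (a : R) : le x y -> 0 <= a -> le (a *: x) (a *: y). Proof. by case: hE => _ _ h _ _; apply: h. Qed.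
Lemma supE x y : exists s, is_sup le x y s. Proof. by case: hE => _ _ _ h _. Qed.
Lemma normM x y ax ay : is_sup le x (- x) ax -> is_sup le y (- y) ay -> le ax ay -> `|x| <= `|y|.
Proof. by case: hE => _ _ _ _ h; apply: h. Qed.

Lemma leDr x y z : le (x + z) (y + z) -> le x y.
Proof. by move=> /(leD (- z)); rewrite !addrK. Qed.
Lemma leD2 a b c d : le a b -> le c d -> le (a + c) (b + d).
Proof.
move=> h1 h2; apply: (leT (leD c h1)); rewrite addrC (addrC b).
exact: leD.
Qed.
Lemma le_sub0 x y : le x y -> le 0 (y - x).
Proof. by move=> /(leD (- x)); rewrite addrN. Qed.
Lemma le_0sub x y : le 0 (y - x) -> le x y.
Proof. by move=> /(leD x); rewrite add0r subrK. Qed.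
Lemma leN x y : le x y -> le (- y) (- x).
Proof.
move=> /(leD (- x - y)).
have -> : x + (- x - y) = - y by rewrite addrA subrr add0r.
by have -> : y + (- x - y) = - x by rewrite addrCA subrr addr0.
Qed.

Lemma le_addr x y : le 0 y -> le x (x + y).
Proof. by move=> /(leD x); rewrite add0r addrC. Qed.

Lemma sup_uniq x y s s' : is_sup le x y s -> is_sup le x y s' -> s = s'.
Proof. by move=> [h1 [h2 h3]] [h1' [h2' h3']]; apply: leA; [apply: h3|apply: h3']. Qed.

Definition jn x y : E := sval (cid (supE x y)).
Lemma jnP x y : is_sup le x y (jn x y). Proof. exact: (svalP (cid (supE x y))). Qed.
Lemma jn_l x y : le x (jn x y). Proof. by case: (jnP x y). Qed.
Lemma jn_r x y : le y (jn x y). Proof. by case: (jnP x y) => _ []. Qed.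
Lemma jn_least x y z : le x z -> le y z -> le (jn x y) z.
Proof. by case: (jnP x y) => _ [] _ h; apply: h. Qed.
Lemma jn_eq x y s : is_sup le x y s -> jn x y = s.
Proof. exact/sup_uniq/jnP. Qed.
Lemma jnC x y : jn x y = jn y x.
Proof. apply: jn_eq; split; [exact: jn_r|split; [exact: jn_l|]] => z h1 h2; exact: jn_least. Qed.
Lemma jnD x y z : jn (x + z) (y + z) = jn x y + z.
Proof.
apply: jn_eq; split; [exact/leD/jn_l|split; [exact/leD/jn_r|]] => w h1 h2.
rewrite -(subrK z w); apply: leD; apply: jn_least; apply: (leDr (z:=z)); by rewrite subrK.
Qed.
Lemma jnZ (a : R) x y : 0 < a -> jn (a *: x) (a *: y) = a *: jn x y.
Proof.
move=> a0; apply: jn_eq; split; [exact: leZ (jn_l x y) (ltW a0)|split; [exact: leZ (jn_r x y) (ltW a0)|]] => w h1 h2.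
have -> : w = a *: (a^-1 *: w) by rewrite scalerA divff ?gt_eqF // scale1r.
apply: leZ; last exact: ltW.
have ai : 0 <= a^-1 by rewrite invr_ge0 ltW.
apply: jn_least.
  by have := leZ h1 ai; rewrite scalerA mulVf ?gt_eqF // scale1r.
by have := leZ h2 ai; rewrite scalerA mulVf ?gt_eqF // scale1r.
Qed.
Lemma jn_id x y : le y x -> jn x y = x.
Proof. by move=> h; apply: jn_eq; split; [exact: leR|split => // z]. Qed.

Definition pos x := jn x 0.
Definition ab x := jn x (- x).

Lemma pos_ge0 x : le 0 (pos x). Proof. exact: jn_r. Qed.
Lemma pos_ge x : le x (pos x). Proof. exact: jn_l. Qed.
Lemma pos_id x : le 0 x -> pos x = x. Proof. exact: jn_id. Qed.
Lemma pos_0 x : le x 0 -> pos x = 0. Proof. by move=> h; rewrite /pos jnC jn_id. Qed.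
Lemma pos_sub x y : pos (x + y) = jn (x + y) 0.
Proof. by []. Qed.
Lemma posD x y : le (pos (x + y)) (pos x + pos y).
Proof.
apply: jn_least; first exact: leD2 (pos_ge x) (pos_ge y).
by rewrite -(addr0 0); apply: leD2; exact: pos_ge0.
Qed.
Lemma posZ (a : R) x : 0 <= a -> pos (a *: x) = a *: pos x.
Proof.
rewrite le_eqVlt => /orP[/eqP <-|a0]; first by rewrite !scale0r pos_id //; exact: leR.
by rewrite /pos -jnZ // scaler0.
Qed.
Lemma jn_pos a b : jn a b = b + pos (a - b).
Proof. by have := jnD (a - b) 0 b; rewrite subrK add0r => ->; rewrite addrC. Qed.
Lemma pos_dec d : d = pos d - pos (- d).
Proof.
have := jnD 0 d (- d); rewrite add0r subrr => e.
by rewrite /pos e jnC opprD opprK addrA subrr add0r.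
Qed.
Lemma ab_ge x : le x (ab x). Proof. exact: jn_l. Qed.
Lemma ab_geN x : le (- x) (ab x). Proof. exact: jn_r. Qed.
Lemma ab_ge0 x : le 0 (ab x).
Proof.
have h : le 0 (2%:R *: ab x).
  rewrite -(subrr x) scaler_nat mulr2n; exact: leD2 (ab_ge x) (ab_geN x).
have ai : 0 <= (2%:R : R)^-1 by rewrite invr_ge0 ler0n.
by have := leZ h ai; rewrite scaler0 scalerA mulVf ?pnatr_eq0 // scale1r.
Qed.
Lemma le_pos_ab x : le (pos x) (ab x).
Proof. apply: jn_least; [exact: ab_ge | exact: ab_ge0]. Qed.
Lemma abN x : ab (- x) = ab x.
Proof. by rewrite /ab opprK jnC. Qed.
Lemma ab_id x : le 0 x -> ab x = x.
Proof. move=> h; apply: jn_id; apply: (leT (leN h)); rewrite oppr0; exact: h. Qed.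
Lemma sup_ab x : is_sup le x (- x) (ab x). Proof. exact: jnP. Qed.

Lemma norm_mono a b : le 0 a -> le a b -> `|a| <= `|b|.
Proof.
move=> a0 ab'; have b0 := leT a0 ab'.
apply: (@normM a b a b) => //.
- by rewrite -{3}(ab_id a0); exact: sup_ab.
- by rewrite -{3}(ab_id b0); exact: sup_ab.
Qed.
Lemma norm_ab x : `|ab x| = `|x|.
Proof.
apply/eqP; rewrite eq_le; apply/andP; split.
- apply: (@normM _ _ (ab x) (ab x)) (leR _); last exact: sup_ab.
  by rewrite -{3}(ab_id (ab_ge0 x)); exact: sup_ab.
- apply: (@normM _ _ (ab x) (ab x)) (leR _); first exact: sup_ab.
  by rewrite -{3}(ab_id (ab_ge0 x)); exact: sup_ab.
Qed.
Lemma norm_pos x : `|pos x| <= `|x|.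
Proof. by rewrite -(norm_ab x); apply: norm_mono; [exact: pos_ge0|exact: le_pos_ab]. Qed.

Lemma jn_lip a b c d : `|jn a b - jn c d| <= `|a - c| + `|b - d|.
Proof.
pose S := ab (a - c) + ab (b - d).
have S0 : le 0 S by rewrite -(addr0 0); apply: leD2; exact: ab_ge0.
have k : forall a b c d, le (jn a b - jn c d) (ab (a - c) + ab (b - d)).
  move=> a1 b1 c1 d1.
  suff h : le (jn a1 b1) (ab (a1 - c1) + ab (b1 - d1) + jn c1 d1).
    by have := leD (- jn c1 d1) h; rewrite addrK.
  apply: jn_least.
  - apply: (leT (y := ab (a1 - c1) + c1)).
      by have := leD c1 (ab_ge (a1 - c1)); rewrite subrK.
    apply: leD2; last exact: jn_l.
    exact: le_addr (ab_ge0 _).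
  - apply: (leT (y := ab (b1 - d1) + d1)).
      by have := leD d1 (ab_ge (b1 - d1)); rewrite subrK.
    apply: leD2; last exact: jn_r.
    by rewrite (addrC (ab (a1 - c1))); exact: le_addr (ab_ge0 _).
have h1 := k a b c d.
have h2 : le (- (jn a b - jn c d)) S.
  by rewrite opprB /S -abN opprB -(abN (b - d)) opprB; exact: k.
have hab : le (ab (jn a b - jn c d)) S by exact: jn_least.
rewrite -(norm_ab (jn a b - jn c d)); apply: le_trans (norm_mono (ab_ge0 _) hab) _.
apply: le_trans (ler_normD _ _) _.
by rewrite !norm_ab.
Qed.

Definition posf (w : E -> R) := linR w /\ (forall x, le 0 x -> 0 <= w x).
Definition bnd (w : E -> R) := exists C : R, forall x, `|w x| <= C * `|x|.
Definition posb (w : E -> R) := posf w /\ bnd w.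
Definition lew (w v : E -> R) := forall x, le 0 x -> w x <= v x.

Lemma lin0 (w : E -> R) : linR w -> w 0 = 0.
Proof. by move=> h; have := h 1 0 0; rewrite scaler0 add0r mul1r; lra. Qed.
Lemma linD (w : E -> R) : linR w -> forall x y, w (x + y) = w x + w y.
Proof. by move=> h x y; rewrite -(scale1r x) h mul1r scale1r. Qed.
Lemma linZ (w : E -> R) : linR w -> forall a x, w (a *: x) = a * w x.
Proof. by move=> h a x; rewrite -(addr0 (a *: x)) h (lin0 h) addr0. Qed.
Lemma linN (w : E -> R) : linR w -> forall x, w (- x) = - w x.
Proof. by move=> h x; rewrite -scaleN1r linZ // mulN1r. Qed.
Lemma linB (w : E -> R) : linR w -> forall x y, w (x - y) = w x - w y.
Proof. by move=> h x y; rewrite linD // linN. Qed.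

Lemma posf_abs (w : E -> R) x : posf w -> `|w x| <= w (ab x).
Proof.
move=> [hl hp]; rewrite ler_norml; apply/andP; split.
- have := hp _ (le_sub0 (ab_geN x)); rewrite linB // linN //; lra.
- have := hp _ (le_sub0 (ab_ge x)); rewrite linB //; lra.
Qed.
Lemma posf_mono (w : E -> R) x y : posf w -> le x y -> w x <= w y.
Proof. by move=> [hl hp] h; have := hp _ (le_sub0 h); rewrite linB //; lra. Qed.

Lemma dom_bnd (w v : E -> R) : posf w -> posb v -> lew w v -> bnd w.
Proof.
move=> hw [hv [C hC]] wv; exists C => x.
apply: le_trans (posf_abs x hw) _.
have h1 := wv _ (ab_ge0 x).
apply: le_trans h1 _.
have h2 := hC (ab x).
apply: le_trans (ler_norm _) _.
by rewrite -(norm_ab x).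
Qed.
End LAT.



Section DEC.
Variables (R : realType) (E : normedModType R) (le : E -> E -> Prop).
Hypothesis hE : banach_lattice le.

Lemma split2 (y : E -> R) a b : posb le y -> exists u v : E -> R,
  [/\ posb le u, posb le v, (forall x, u x + v x = y x) &
      forall w, posf le w -> (lew le w u \/ lew le w v) ->
        w (jn hE a b) = Num.max (w a) (w b)].
Proof.
move=> hy; have [[yl yp] yb] := hy.
pose p := fun x => y (pos hE x).
have sp : sublin p.
  split.
  - move=> x z; rewrite /p -(linD yl); apply: (posf_mono hE (conj yl yp)); exact: posD.
  - by move=> c x c0; rewrite /p posZ // (linZ yl).
pose d := a - b.
have [u [ul ule ud]] := hahn_banach d sp.
have up : forall x, le 0 x -> 0 <= u x.
  move=> x x0; have := ule (- x); rewrite /p pos_0 ?(lin0 yl) ?(linN ul); first lra.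
  by have := leN hE x0; rewrite oppr0.
have uy : lew le u y.
  by move=> x x0; have := ule x; rewrite /p pos_id.
have upf : posf le u by [].
have ub : posb le u by split => //; exact: dom_bnd upf hy uy.
pose v := fun x => y x - u x.
have vl : linR v by move=> c x z; rewrite /v yl ul; ring.
have vp : forall x, le 0 x -> 0 <= v x by move=> x x0; have := uy x x0; rewrite /v; lra.
have vy : lew le v y by move=> x x0; have := up x x0; rewrite /v; lra.
have vpf : posf le v by [].
have vb : posb le v by split => //; exact: dom_bnd vpf hy vy.
exists u, v; split => //; first by move=> x; rewrite /v; ring.
pose pp := pos hE d; pose n := pos hE (- d).
have pp0 : le 0 pp by exact: pos_ge0.
have n0 : le 0 n by exact: pos_ge0.
have ddec : d = pp - n by exact: pos_dec.
have ujn : forall w, linR w -> w (jn hE a b) = w b + w pp.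
  by move=> w wl; rewrite jn_pos (linD wl).
have wd : forall w, linR w -> w d = w pp - w n by move=> w wl; rewrite {1}ddec (linB wl).
have wab : forall w, linR w -> w d = w a - w b by move=> w wl; rewrite /d (linB wl).
have upp : u pp <= y pp by have := ule pp; rewrite /p pos_id.
have udv : u d = y pp by [].
move=> w [wl wp] [wu|wv].
- have un : u n = 0.
    have := wd u ul; have := up n n0; lra.
  have wn : w n = 0.
    have := wu n n0; have := wp n n0; lra.
  have := wd w wl; have := wab w wl; have := wp pp pp0; rewrite (ujn w wl) => h1 h2 h3.
  rewrite max_l; lra.
- have vpp : v pp = 0.
    have := vp pp pp0; have := wd u ul; have := up n n0; rewrite /v; lra.
  have wpp : w pp = 0.
    have := wv pp pp0; have := wp pp pp0; lra.
  have := wd w wl; have := wab w wl; have := wp n n0; rewrite (ujn w wl) => h1 h2 h3.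
  rewrite max_r; lra.
Qed.

Inductive term : Type :=
  | Var of E | Add of term & term | Scl of R & term | Mx of term & term.

Fixpoint evE (t : term) : E :=
  match t with
  | Var x => x
  | Add t1 t2 => evE t1 + evE t2
  | Scl a t1 => a *: evE t1
  | Mx t1 t2 => jn hE (evE t1) (evE t2)
  end.

Fixpoint evR (w : E -> R) (t : term) : R :=
  match t with
  | Var x => w x
  | Add t1 t2 => evR w t1 + evR w t2
  | Scl a t1 => a * evR w t1
  | Mx t1 t2 => Num.max (evR w t1) (evR w t2)
  end.

Definition Hx (w : E -> R) (t : term) :=
  forall w', posf le w' -> lew le w' w -> w' (evE t) = evR w' t.

Fixpoint allp (T : Type) (P : T -> Prop) (s : seq T) : Prop :=
  match s with [::] => True | a :: s' => P a /\ allp P s' end.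

Lemma allp_imp T (P Q : T -> Prop) s : (forall a, P a -> Q a) -> allp P s -> allp Q s.
Proof. by move=> h; elim: s => //= a s IH [/h pa /IH]. Qed.

Lemma allp_cat T (P : T -> Prop) s1 s2 : allp P s1 -> allp P s2 -> allp P (s1 ++ s2).
Proof. by elim: s1 => //= a s IH [pa ps] p2; split => //; exact: IH. Qed.

Lemma allp_and T (P Q : T -> Prop) s : allp P s -> allp Q s -> allp (fun a => P a /\ Q a) s.
Proof. by elim: s => //= a s IH [? ?] [? ?]; split => //; exact: IH. Qed.

Definition sumeq (ws : seq (E -> R)) (y : E -> R) := forall x, \sum_(w <- ws) w x = y x.

Lemma sum_ge0 ws x : allp (posf le) ws -> le 0 x -> 0 <= \sum_(w <- ws) w x.
Proof.
move=> hw x0; elim: ws hw => [|w ws IH] /=; first by rewrite big_nil.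
by move=> [[_ wp] hr]; rewrite big_cons addr_ge0 //; [exact: wp | exact: IH].
Qed.

Lemma pieces_le ws y : allp (posf le) ws -> sumeq ws y -> allp (fun w => lew le w y) ws.
Proof.
elim: ws y => [|w ws IH] y //= [hw hr] hs; split.
- move=> x x0; have := hs x; rewrite big_cons => <-.
  have := sum_ge0 hr x0; lra.
- have hs' : sumeq ws (fun x => y x - w x).
    by move=> x; have := hs x; rewrite big_cons => <-; lra.
  apply: allp_imp (IH _ hr hs') => v hv x x0.
  have := hv x x0; have := (proj2 hw) x x0; lra.
Qed.

Lemma lew_trans (u v w : E -> R) : lew le u v -> lew le v w -> lew le u w.
Proof. by move=> h1 h2 x x0; exact: le_trans (h1 x x0) (h2 x x0). Qed.

Lemma refine (A B : (E -> R) -> Prop) :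
  (forall w, posb le w -> A w -> exists ws, allp (fun v => posb le v /\ B v) ws /\ sumeq ws w) ->
  (forall w v, A w -> posb le v -> lew le v w -> A v) ->
  forall ws1, allp (fun w => posb le w /\ A w) ws1 ->
  exists ws, allp (fun v => posb le v /\ A v /\ B v) ws /\ sumeq ws (fun x => \sum_(w <- ws1) w x).
Proof.
move=> hAB hA; elim => [|w ws1 IH] /=.
  by move=> _; exists [::]; split => // x; rewrite !big_nil.
move=> [[hwb hwA] hr]; have [ws [hws hs]] := IH hr.
have [wsw [hwsw hsw]] := hAB w hwb hwA.
exists (wsw ++ ws); split.
- apply: allp_cat => //.
  have hle := pieces_le (allp_imp (fun v (h : posb le v /\ B v) => proj1 (proj1 h)) hwsw) hsw.
  have := allp_and hwsw hle; apply: allp_imp => v [[vb vB] vle].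
  by split => //; split => //; exact: hA hwA vb vle.
- by move=> x; rewrite big_cat big_cons hsw hs.
Qed.

Lemma Hx_hered t w v : Hx w t -> posb le v -> lew le v w -> Hx v t.
Proof. by move=> h _ vw w' w'p w'v; apply: h => //; exact: lew_trans w'v vw. Qed.

Lemma decomp t y : posb le y ->
  exists ws, allp (fun w => posb le w /\ Hx w t) ws /\ sumeq ws y.
Proof.
elim: t y => [x|t1 IH1 t2 IH2|a t1 IH1|t1 IH1 t2 IH2] y hy.
- exists [:: y]; split; last by move=> z; rewrite big_seq1.
  by split => //; split => // w' _ _.
- have [ws1 [h1 s1]] := IH1 y hy.
  have [ws [h s]] := @refine (fun w => Hx w t1) (fun w => Hx w t2) (fun w wb _ => IH2 w wb)
     (fun w v hw hv hvw => Hx_hered hw hv hvw) ws1 h1.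
  exists ws; split; last by move=> x; rewrite s s1.
  apply: allp_imp h => w [wb [w1 w2]]; split => // w' w'p w'w /=.
  by rewrite (linD (proj1 w'p)) w1 // w2.
- have [ws [h s]] := IH1 y hy; exists ws; split => //.
  apply: allp_imp h => w [wb w1]; split => // w' w'p w'w /=.
  by rewrite (linZ (proj1 w'p)) w1.
- have [ws1 [h1 s1]] := IH1 y hy.
  have [ws2 [h2 s2]] := @refine (fun w => Hx w t1) (fun w => Hx w t2) (fun w wb _ => IH2 w wb)
     (fun w v hw hv hvw => Hx_hered hw hv hvw) ws1 h1.
  have hAB : forall w, posb le w -> (Hx w t1 /\ Hx w t2) ->
      exists ws, allp (fun v => posb le v /\ Hx v (Mx t1 t2)) ws /\ sumeq ws w.
    move=> w wb [w1 w2].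
    have [u [v [ub vb uv hmax]]] := split2 (evE t1) (evE t2) wb.
    have uw : lew le u w by move=> x x0; rewrite -uv; have := (proj2 (proj1 vb)) x x0; lra.
    have vw : lew le v w by move=> x x0; rewrite -uv; have := (proj2 (proj1 ub)) x x0; lra.
    exists [:: u; v]; split; last by move=> x; rewrite big_cons big_seq1.
    split; [split => //|split => //; split => //].
    + move=> w' w'p w'u /=; rewrite hmax //; last by left.
      by rewrite (w1 w') ?(w2 w') //; exact: lew_trans w'u uw.
    + move=> w' w'p w'v /=; rewrite hmax //; last by right.
      by rewrite (w1 w') ?(w2 w') //; exact: lew_trans w'v vw.
  have [ws [h s]] := @refine (fun w => Hx w t1 /\ Hx w t2) (fun w => Hx w (Mx t1 t2)) hAB
     (fun w v hw hv hvw => conj (Hx_hered (proj1 hw) hv hvw) (Hx_hered (proj2 hw) hv hvw)) ws2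
     (allp_imp (fun w (h : posb le w /\ Hx w t1 /\ Hx w t2) => conj (proj1 h) (proj2 h)) h2).
  exists ws; split; last by move=> x; rewrite s s2 s1.
  by apply: allp_imp h => w [wb [_ wm]].
Qed.

Lemma allp_nth T (P : T -> Prop) (s : seq T) d k : allp P s -> (k < size s)%N -> P (nth d s k).
Proof. by elim: s k => //= a s IH [|k] [pa ps] //= hk; exact: IH. Qed.

Lemma allp_sum_le (F G : (E -> R) -> R) ws : allp (fun w => F w <= G w) ws ->
  \sum_(w <- ws) F w <= \sum_(w <- ws) G w.
Proof.
elim: ws => [|w ws IH] /=; first by rewrite !big_nil.
by move=> [h hr]; rewrite !big_cons lerD // IH.
Qed.

Lemma allp_sum_eq (F G : (E -> R) -> R) ws : allp (fun w => F w = G w) ws ->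
  \sum_(w <- ws) F w = \sum_(w <- ws) G w.
Proof.
elim: ws => [|w ws IH] /=; first by rewrite !big_nil.
by move=> [h hr]; rewrite !big_cons h IH.
Qed.

Definition fT (t : term) : dual E -> R := fun xs => evR (sval xs) t.

Lemma key t : ((`|evE t|)%:E <= fbl_norm (fT t))%E.
Proof.
set z := evE t.
pose p := fun x => `|pos hE x|.
have sp : sublin p.
  split.
  - move=> x y; rewrite /p; apply: le_trans _ (ler_normD _ _).
    have h1 := posD hE x y. have h0 := pos_ge0 hE (x + y). have := norm_mono hE h0 h1. exact.
  - by move=> c x c0; rewrite /p posZ // normrZ ger0_norm.
have [u [ul ule uz]] := hahn_banach (ab hE z) sp.
have uz' : u (ab hE z) = `|z| by rewrite uz /p pos_id ?norm_ab //; exact: ab_ge0.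
have up : forall x, le 0 x -> 0 <= u x.
  move=> x x0; have := ule (- x); rewrite /p pos_0 ?(linN ul) ?normr0; first lra.
  by have := leN hE x0; rewrite oppr0.
have upf : posf le u by [].
have uab : forall x, u (ab hE x) <= `|x|.
  by move=> x; have := ule (ab hE x); rewrite /p pos_id ?norm_ab //; exact: ab_ge0.
have ub : posb le u.
  split => //; exists 1 => x; rewrite mul1r; apply: le_trans (posf_abs hE x upf) _.
  exact: uab.
have [ws [hws hs]] := decomp (Mx t (Scl (-1) t)) ub.
have habs : allp (fun w => `|evR w t| = w (ab hE z)) ws.
  apply: allp_imp hws => w [wb wH].
  have e := wH w (proj1 wb) (fun x _ => lexx _); rewrite /= in e.
  by rewrite /ab -scaleN1r e mulN1r maxrN.
set d0 : E -> R := fun _ => 0.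
pose n := size ws.
have pf : forall k : 'I_n, is_dual (nth d0 ws k).
  move=> k; have := allp_nth d0 hws (ltn_ord k) => [[[[wl _] wb] _]].
  by split.
pose xs : 'I_n -> dual E := fun k => exist _ (nth d0 ws k) (pf k).
apply: le_ereal_sup_tmp; exists (\sum_(k < n) `|fT t (xs k)|)%:E; last first.
  rewrite lee_fin /fT /xs /=.
  rewrite -(big_mkord xpredT (fun k => `|evR (nth d0 ws k) t|)) -(big_nth d0 xpredT (fun w => `|evR w t|)).
  by rewrite (allp_sum_eq habs) hs uz'.
exists n, xs; split => // x x1.
rewrite /xs /=.
rewrite -(big_mkord xpredT (fun k => `|nth d0 ws k x|)) -(big_nth d0 xpredT (fun w => `|w x|)).
apply: le_trans (_ : \sum_(w <- ws) w (ab hE x) <= 1).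
  apply: allp_sum_le; apply: allp_imp hws => w [wb _]; have := posf_abs hE x (proj1 wb); exact.
by rewrite hs; apply: le_trans (uab x) x1.
Qed.
End DEC.



Section REALS.
Variable R : realType.
Lemma inv_le (N n : nat) : (N <= n)%N -> ((n.+1%:R : R)^-1 <= (N.+1%:R)^-1).
Proof. by move=> h; rewrite lef_pV2 ?posrE ?ltr0Sn // ler_nat ltnS. Qed.

Lemma archi_inv (e : R) : 0 < e -> exists N : nat, (N.+1%:R : R)^-1 <= e.
Proof.
move=> e0; have ei : 0 <= e^-1 by rewrite invr_ge0 ltW.
have := archi_boundP ei; set b := Num.Def.archi_bound _ => hb.
exists b; rewrite -[X in _ <= X]invrK lef_pV2 ?posrE ?ltr0Sn ?invr_gt0 //.
by apply: le_trans (ltW hb) _; rewrite ler_nat.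
Qed.

Lemma max_lip (a b c d : R) : `|Num.max a b - Num.max c d| <= `|a - c| + `|b - d|.
Proof.
have h1 := ler_norm (a - c); have h2 := ler_norm (b - d).
have h3 := ler_norm (c - a); have h4 := ler_norm (d - b).
rewrite distrC in h3; rewrite (distrC d) in h4.
rewrite ler_norml; apply/andP; split; rewrite /Num.max;
  case: ifP => /= hab; case: ifP => /= hcd; lra.
Qed.

Lemma small_scale (a e : R) : 0 < e -> `|a| * (e / (`|a| + 1)) <= e.
Proof.
move=> e0; have ha : 0 < `|a| + 1 by rewrite ltr_wpDl.
rewrite mulrA ler_pdivrMr // [X in X <= _]mulrC mulrDr mulr1 lerDl; exact: ltW.
Qed.

Lemma zero_of_small (r : R) : 0 <= r -> (forall e, 0 < e -> r <= 4 * e) -> r = 0.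
Proof.
move=> r0 h; apply/eqP; rewrite eq_le r0 andbT; rewrite leNgt; apply/negP => rp.
have := h (r / 8); rewrite divr_gt0 // => /(_ isT); lra.
Qed.
End REALS.

Section MAIN.
Variables (R : realType) (E : completeNormedModType R) (le : E -> E -> Prop).
Hypothesis hE : banach_lattice le.

Local Notation evE := (@evE R E le hE).

Lemma FN (f g h : dual E -> R) (c1 c2 b1 b2 : R) : 0 <= c1 -> 0 <= c2 ->
  (forall xs, `|f xs| <= c1 * `|g xs| + c2 * `|h xs|) ->
  (fbl_norm g <= b1%:E)%E -> (fbl_norm h <= b2%:E)%E ->
  (fbl_norm f <= (c1 * b1 + c2 * b2)%:E)%E.
Proof.
move=> c10 c20 hf hg hh; apply: ge_ereal_sup => _ [n [xs [hc ->]]].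
rewrite lee_fin.
have sg : \sum_(k < n) `|g (xs k)| <= b1.
  rewrite -lee_fin; apply: le_trans hg; apply: ereal_sup_ubound; exists n, xs; split => //.
have sh : \sum_(k < n) `|h (xs k)| <= b2.
  rewrite -lee_fin; apply: le_trans hh; apply: ereal_sup_ubound; exists n, xs; split => //.
apply: le_trans (_ : \sum_(k < n) (c1 * `|g (xs k)| + c2 * `|h (xs k)|) <= _).
  by apply: ler_sum => k _; exact: hf.
rewrite big_split /= -!mulr_sumr; apply: lerD; exact: ler_wpM2l.
Qed.

Lemma fbl_norm0 (f : dual E -> R) : (forall xs, f xs = 0) -> (fbl_norm f <= 0%:E)%E.
Proof.
move=> h; apply: ge_ereal_sup => _ [n [xs [hc ->]]].
by rewrite lee_fin big1 // => k _; rewrite h normr0.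
Qed.

Lemma key_diff t1 t2 b : (fbl_norm (fun xs => (fT t1 xs - fT t2 xs)%R) <= b%:E)%E ->
  `|evE t1 - evE t2| <= b.
Proof.
move=> h; have := key hE (Add t1 (Scl (-1) t2)).
have -> : fT (Add t1 (Scl (-1) t2)) = (fun xs => fT t1 xs - fT t2 xs).
  by apply: funext => xs; rewrite /fT /= mulN1r.
rewrite /= scaleN1r => h2; rewrite -lee_fin; exact: le_trans h2 h.
Qed.

Definition Rel (f : dual E -> R) (x : E) := forall e, 0 < e -> exists t,
  (fbl_norm (fun xs => (f xs - fT t xs)%R) <= e%:E)%E /\ `|x - evE t| <= e.

Definition appr (f : dual E -> R) := forall e, 0 < e -> exists t,
  (fbl_norm (fun xs => (f xs - fT t xs)%R) <= e%:E)%E.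

Lemma Rel_uniq f x y : Rel f x -> Rel f y -> x = y.
Proof.
move=> hx hy; apply/eqP; rewrite -subr_eq0 -normr_eq0; apply/eqP.
apply: zero_of_small => // e e0.
have [t1 [n1 d1]] := hx e e0; have [t2 [n2 d2]] := hy e e0.
have h12 : `|evE t1 - evE t2| <= 1 * e + 1 * e.
  apply: key_diff; apply: FN n1 n2 => // xs; rewrite !mul1r.
  rewrite (distrC (f xs)); apply: le_trans _ (ler_normD _ _).
  by rewrite addrA subrK.
have a1 := ler_normD (x - evE t1) (evE t1 - y).
have a2 := ler_normD (evE t1 - evE t2) (evE t2 - y).
rewrite addrA subrK in a1; rewrite addrA subrK in a2.
have : `|evE t2 - y| = `|y - evE t2| by rewrite distrC.
lra.
Qed.

Lemma Rel_add f g x y : Rel f x -> Rel g y -> Rel (fun xs => f xs + g xs) (x + y).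
Proof.
move=> hx hy e e0; have e2 : 0 < e / 2 by rewrite divr_gt0.
have [t1 [n1 d1]] := hx _ e2; have [t2 [n2 d2]] := hy _ e2.
exists (Add t1 t2); split.
- have := FN ler01 ler01 _ n1 n2.
  rewrite !mul1r -splitr; apply => xs; rewrite !mul1r /fT /=.
  by rewrite opprD addrACA; exact: ler_normD.
- rewrite /= opprD addrACA; apply: le_trans (ler_normD _ _) _.
  by rewrite (splitr e) lerD.
Qed.

Lemma Rel_scale f x (a : R) : Rel f x -> Rel (fun xs => a * f xs) (a *: x).
Proof.
move=> hx e e0; have e2 : 0 < e / (`|a| + 1) by rewrite divr_gt0 // ltr_wpDl.
have [t1 [n1 d1]] := hx _ e2.
exists (Scl a t1); split.
- have hh : forall xs, `|a * f xs - fT (Scl a t1) xs| <=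
      `|a| * `|f xs - fT t1 xs| + 0 * `|f xs - fT t1 xs|.
    by move=> xs; rewrite mul0r addr0 /fT /= -mulrBr normrM.
  apply: le_trans (FN (normr_ge0 a) (lexx 0) hh n1 n1) _.
  by rewrite mul0r addr0 lee_fin small_scale.
- rewrite /= -scalerBr normrZ; apply: le_trans (small_scale a e0).
  by apply: ler_wpM2l.
Qed.

Lemma Rel_max f g x y : Rel f x -> Rel g y ->
  Rel (fun xs => Num.max (f xs) (g xs)) (jn hE x y).
Proof.
move=> hx hy e e0; have e2 : 0 < e / 2 by rewrite divr_gt0.
have [t1 [n1 d1]] := hx _ e2; have [t2 [n2 d2]] := hy _ e2.
exists (Mx t1 t2); split.
- have := FN ler01 ler01 _ n1 n2.
  rewrite !mul1r -splitr; apply => xs; rewrite !mul1r /fT /=.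
  exact: max_lip.
- rewrite /=; apply: le_trans (jn_lip hE _ _ _ _) _.
  by rewrite (splitr e) lerD.
Qed.

Lemma Rel_delta x : Rel (delta x) x.
Proof.
move=> e e0; exists (Var x); split.
- by apply: le_trans (fbl_norm0 _) _; [move=> xs; rewrite /fT /= subrr | rewrite lee_fin ltW].
- by rewrite /= subrr normr0 ltW.
Qed.

Lemma appr_Rel f : appr f -> exists x, Rel f x.
Proof.
move=> hf.
have /choice [tn htn] : forall n : nat, exists t,
    (fbl_norm (fun xs => (f xs - fT t xs)%R) <= ((n.+1%:R : R)^-1)%:E)%E.
  by move=> n; apply: hf; rewrite invr_gt0 ltr0Sn.
pose u := fun n => evE (tn n).
have dist : forall n m, `|u n - u m| <= (n.+1%:R)^-1 + (m.+1%:R)^-1.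
  move=> n m; apply: key_diff.
  have := FN ler01 ler01 _ (htn n) (htn m); rewrite !mul1r; apply => xs; rewrite !mul1r.
  rewrite (distrC (f xs)); apply: le_trans _ (ler_normD _ _).
  by rewrite addrA subrK.
have cu : cvg (u @ \oo).
  apply: cauchy_cvg; apply: cauchy_exP => e e0.
  have e2 : 0 < e / 4 by rewrite divr_gt0.
  have [N hN] := archi_inv e2.
  exists (u N); exists N => // n /= hn.
  rewrite -ball_normE /ball_ /=.
  apply: le_lt_trans (dist N n) _.
  have := inv_le R hn.
  move=> hh; set a := (N.+1%:R^-1 : R) in hN hh *; set b := (n.+1%:R^-1 : R) in hh *; lra.
exists (lim (u @ \oo)) => e e0.
have e4 : 0 < e / 4 by rewrite divr_gt0.
have [N hN] := archi_inv e4.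
have [M0 _ hM0] := (cvgrPdist_le _ _).1 cu _ e4.
pose M := maxn N M0.
have hM := hM0 M (leq_maxr N M0).
have hNM := inv_le R (leq_maxl N M0).
have dNM := dist M N.
exists (tn N); split.
- apply: le_trans (htn N) _; rewrite lee_fin.
  set a := (N.+1%:R^-1 : R) in hN *; lra.
- have := ler_normD (lim (u @ \oo) - u M) (u M - u N).
  rewrite addrA subrK => h.
  apply: le_trans h _.
  set a := (N.+1%:R^-1 : R) in hN hNM dNM *; set b := (M.+1%:R^-1 : R) in hNM dNM *.
  lra.
Qed.

Lemma appr_closed : fbl_closed (fun f => exists x, Rel f x).
Proof.
split.
- by move=> x; exists x; exact: Rel_delta.
- by move=> f g [x hx] [y hy]; exists (x + y); exact: Rel_add.
- by move=> a f [x hx]; exists (a *: x); exact: Rel_scale.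
- by move=> f g [x hx] [y hy]; exists (jn hE x y); exact: Rel_max.
- move=> f _ happ; apply: appr_Rel => e e0.
  have e2 : 0 < e / 2 by rewrite divr_gt0.
  have [g [[x hx] hg]] := happ _ e2.
  have [t [ht _]] := hx _ e2.
  exists t; rewrite (splitr e).
  have := FN ler01 ler01 _ (ltW hg) ht; rewrite !mul1r; apply => xs; rewrite !mul1r.
  apply: le_trans _ (ler_normD _ _).
  by rewrite addrA subrK.
Qed.

Definition Pmap (f : dual E -> R) : E :=
  match pselect (exists x, Rel f x) with
  | left h => projT1 (cid h)
  | right _ => 0
  end.

Lemma PmapP f x : Rel f x -> Pmap f = x.
Proof.
move=> hx; rewrite /Pmap; case: pselect => [h|h]; last by exfalso; apply: h; exists x.
exact: Rel_uniq (projT2 (cid h)) hx.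
Qed.

Lemma FBL_Rel f : FBL f -> Rel f (Pmap f).
Proof.
move=> [_ hf]; have [x hx] := hf _ appr_closed.
by rewrite (PmapP hx).
Qed.
End MAIN.


End Helpers.
Import Helpers.

Theorem corollary2p5 (R : realType) (E : completeNormedModType R)
    (le : E -> E -> Prop) (hE : banach_lattice le) :
  exists P : (dual E -> R) -> E,
    [/\ (forall f g, FBL f -> FBL g -> P (fun xs => f xs + g xs) = P f + P g),
        (forall (a : R) f, FBL f -> P (fun xs => a * f xs) = a *: P f),
        (forall f g, FBL f -> FBL g ->
           is_sup le (P f) (P g) (P (fun xs => Num.max (f xs) (g xs)))) &
        (forall x : E, P (delta x) = x)].
Proof.
exists (Helpers.Pmap hE); split.
- move=> f g hf hg; apply: PmapP; apply: Rel_add; exact: FBL_Rel.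
- move=> a f hf; apply: PmapP; apply: Rel_scale; exact: FBL_Rel.
- move=> f g hf hg; rewrite (PmapP (Rel_max (FBL_Rel hE hf) (FBL_Rel hE hg))).
  exact: jnP.
- move=> x; apply: PmapP; exact: Rel_delta.
Qed.
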